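(* Consider a polymatroid game with $n$ players, $m$ resources and demands $d_i$, and let $\delta=\max_{i}d_i$. Consider the following algorithm: initially set $\bar d_i=0$ and $\vec x_i=\vec 0$ for all players $i$. For $k=1,\dots,\sum_i d_i$: choose a player $i$ with $\bar d_i<d_i$, increase $\bar d_i$ by one, and replace $\vec x_i$ by a best response $\vec y_i\in\mathbb{B}_{f_i}(\bar d_i)$ to $\vec x_{-i}$ with $\|\vec y_i-\vec x_i\|=1$; then, while there is a player $j$ who can strictly decrease her private cost by unilaterally changing her strategy within $\mathbb{B}_{f_j}(\bar d_j)$, choose such a player and replace $\vec x_j$ by a best response $\vec y_j\in\mathbb{B}_{f_j}(\bar d_j)$ with $\|\vec y_j-\vec x_j\|=2$. Then the total number of iterations of this algorithm (iterations of the inner while-loop, summed over all rounds) is at most $n^2m\delta^3$.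
   Context: $\mathbb{N}=\{0,1,2,\dots\}$; $\|\cdot\|$ is the $L_1$-norm. A polymatroid game: players $N=\{1,\dots,n\}$, resources $E=\{1,\dots,m\}$; each player $i$ has an integral polymatroid rank function $f_i:2^E\to\mathbb{N}$ (normalized, monotone, submodular) and demand $d_i\le f_i(E)$; the strategy set for demand $d$ is $\mathbb{B}_{f_i}(d)=\{\vec x_i\in\mathbb{N}^E: x_i(U)\le f_i(U)\ \forall U\subseteq E,\ x_i(E)=d\}$, where $x_i(U)=\sum_{e\in U}x_{i,e}$. The private cost is $\pi_i(\vec x)=\sum_{e\in E}C_{i,e}(x_{i,e};x_{-i,e})$, $x_{-i,e}=\sum_{j\neq i}x_{j,e}$, with each $C_{i,e}:\mathbb{N}\times\mathbb{N}\to\mathbb{R}_+$ regular: writing $C^-(x;t)=C(x;t)-C(x-1;t)$ for $x\ge1$, $C^-(x;t)\le C^-(x;t+1)$ and $C^-(x;t+1)\le C^-(x+1;t)$ for all $x\ge1,t\in\mathbb{N}$. A best response of player $i$ to $\vec x_{-i}$ within a strategy set is a strategy minimizing $\pi_i(\cdot,\vec x_{-i})$ over that set. *)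

(* Defs.v *)
From mathcomp Require Import all_boot all_order all_algebra.
From mathcomp Require Import reals.
Set Implicit Arguments. Unset Strict Implicit. Unset Printing Implicit Defensive.
Import Order.TTheory GRing.Theory Num.Theory.
Local Open Scope ring_scope.

Section PolymatroidGame.
Variables (R : realType) (n m : nat).

Definition polymatroid (f : {set 'I_m} -> nat) : Prop :=
  [/\ f set0 = 0%N,
      (forall A B : {set 'I_m}, A \subset B -> (f A <= f B)%N) &
      (forall A B : {set 'I_m}, (f (A :|: B) + f (A :&: B) <= f A + f B)%N)].

Definition marg (C : nat -> nat -> R) (x t : nat) : R := C x t - C x.-1 t.

Definition regular (C : nat -> nat -> R) : Prop :=
  (forall x t, 0 <= C x t) /\
  (forall x t : nat, (1 <= x)%N ->
     marg C x t <= marg C x t.+1 /\ marg C x t.+1 <= marg C x.+1 t).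

Definition inB (f : {set 'I_m} -> nat) (d : nat) (y : 'I_m -> nat) : Prop :=
  (forall U : {set 'I_m}, (\sum_(e in U) y e <= f U)%N) /\
  (\sum_(e : 'I_m) y e)%N = d.

Definition profile := 'I_n -> 'I_m -> nat.

Definition upd (T : Type) (x : 'I_n -> T) (i : 'I_n) (y : T) : 'I_n -> T :=
  fun j => if j == i then y else x j.

Definition pcost (C : 'I_n -> 'I_m -> nat -> nat -> R) (x : profile) (i : 'I_n) : R :=
  \sum_(e : 'I_m) C i e (x i e) (\sum_(j < n | j != i) x j e)%N.

Definition l1 (y z : 'I_m -> nat) : nat :=
  (\sum_(e : 'I_m) ((y e - z e) + (z e - y e)))%N.

Definition best_response (f : 'I_n -> {set 'I_m} -> nat)
    (C : 'I_n -> 'I_m -> nat -> nat -> R) (x : profile) (i : 'I_n) (d : nat)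
    (y : 'I_m -> nat) : Prop :=
  inB (f i) d y /\
  forall z, inB (f i) d z -> pcost C (upd x i y) i <= pcost C (upd x i z) i.

Definition can_improve (f : 'I_n -> {set 'I_m} -> nat)
    (C : 'I_n -> 'I_m -> nat -> nat -> R) (x : profile) (i : 'I_n) (d : nat) : Prop :=
  exists z, inB (f i) d z /\ pcost C (upd x i z) i < pcost C x i.

(* algorithm state: (current demands dbar, current profile x) *)
Definition state := ((('I_n -> nat) * profile)%type).

Definition init_state : state := (fun _ => 0%N, fun _ _ => 0%N).

(* outer step (round k): all players are stable, pick i with dbar_i < d_i,
   increase dbar_i and move to a best response at distance 1 *)
Definition inc_step (f : 'I_n -> {set 'I_m} -> nat)
    (C : 'I_n -> 'I_m -> nat -> nat -> R) (d : 'I_n -> nat) (s s' : state) : Prop :=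
  exists i y,
    [/\ (forall j, ~ can_improve f C s.2 j (s.1 j)),
        (s.1 i < d i)%N /\ s'.1 = upd s.1 i (s.1 i).+1,
        best_response f C s.2 i (s.1 i).+1 y,
        l1 y (s.2 i) = 1%N &
        s'.2 = upd s.2 i y].

Definition imp_step (f : 'I_n -> {set 'I_m} -> nat)
    (C : 'I_n -> 'I_m -> nat -> nat -> R) (s s' : state) : Prop :=
  exists j y,
    [/\ can_improve f C s.2 j (s.1 j),
        s'.1 = s.1,
        best_response f C s.2 j (s.1 j) y,
        l1 y (s.2 j) = 2%N &
        s'.2 = upd s.2 j y].

(* a (prefix of an) execution of the algorithm of length N: states s 0..N,
   kind k = true iff step k is an inner while-loop iteration *)
Definition valid_run (f : 'I_n -> {set 'I_m} -> nat)
    (C : 'I_n -> 'I_m -> nat -> nat -> R) (d : 'I_n -> nat)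
    (N : nat) (s : nat -> state) (kind : nat -> bool) : Prop :=
  s 0%N = init_state /\
  forall k, (k < N)%N ->
    if kind k then imp_step f C (s k) (s k.+1) else inc_step f C d (s k) (s k.+1).

End PolymatroidGame.

(* Main.v *)
Require Import Defs.
From mathcomp Require Import all_boot all_order all_algebra.
From mathcomp Require Import reals.
From mathcomp Require Import ring lra zify.
From Stdlib Require Import FunctionalExtensionality.
Set Implicit Arguments. Unset Strict Implicit. Unset Printing Implicit Defensive.
Import Order.TTheory GRing.Theory Num.Theory.


Section Costs.
Variable R : realType.
Local Open Scope ring_scope.

Lemma marg_mono_t (C : nat -> nat -> R) : regular C ->
  forall u t t', (1 <= u)%N -> (t <= t')%N -> marg C u t <= marg C u t'.
Proof.
move=> [_ hr] u t t' hu htt'. rewrite -(subnKC htt').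
elim: (t' - t)%N => [|k IH]; first by rewrite addn0.
apply: (le_trans IH); rewrite addnS; exact: (hr u _ hu).1.
Qed.

Lemma marg_G (C : nat -> nat -> R) : regular C ->
  forall u T, (1 <= u)%N -> marg C u (T - u) <= marg C u.+1 (T - u.+1).
Proof.
move=> [_ hr] u T hu. case: (leqP u.+1 T) => hT.
- have -> : (T - u = (T - u.+1).+1)%N by lia.
  exact: (hr u _ hu).2.
- have -> : (T - u = 0)%N by lia. have -> : (T - u.+1 = 0)%N by lia.
  have [h1 h2] := hr u 0%N hu. exact: le_trans h1 h2.
Qed.
End Costs.

Section Vec.
Variable m : nat.

Lemma sum1_nat (F : 'I_m -> nat) : (\sum_e F e = 1)%N ->
  exists b, forall e, F e = (e == b) :> nat.
Proof.
move=> hs.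
case: (pickP (fun e => 0 < F e)%N) => [b hb|h0]; last first.
  move: hs; rewrite big1 // => e _; move: (h0 e) => /=; lia.
exists b => e; move: hb => /= hb.
have hs2 : (F b + \sum_(i < m | i != b) F i = 1)%N.
  rewrite -hs. rewrite [in RHS](bigD1 b) //.
have hr : (\sum_(i < m | i != b) F i == 0)%N by apply/eqP; lia.
case: (eqVneq e b) => [->|neb] /=; first by rewrite ?eqxx; lia.
move: hr; rewrite sum_nat_eq0 => /forallP /(_ e); rewrite neb /= => /eqP //.
Qed.

Lemma l1_split (x y : 'I_m -> nat) :
  [/\ l1 y x = (\sum_e (y e - x e) + \sum_e (x e - y e))%N &
      (\sum_e y e + \sum_e (x e - y e) = \sum_e x e + \sum_e (y e - x e))%N].
Proof.
split; first by rewrite /l1 big_split.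
rewrite -!big_split /=; apply: eq_bigr => e _; lia.
Qed.

Lemma l1_two (x y : 'I_m -> nat) : l1 y x = 2%N -> (\sum_e y e = \sum_e x e)%N ->
  exists a b, [/\ a != b, (1 <= x a)%N & forall e, (y e + (e == a) = x e + (e == b))%N].
Proof.
move=> hl hs; have [h1 h2] := l1_split x y.
have hP : (\sum_e (y e - x e) = 1)%N by lia.
have hQ : (\sum_e (x e - y e) = 1)%N by lia.
have [b hb] := sum1_nat hP; have [a ha] := sum1_nat hQ.
exists a, b; split.
- apply/eqP => eab; move: (ha a) (hb a); rewrite eab eqxx /=; lia.
- move: (ha a); rewrite eqxx /=; lia.
- move=> e; rewrite -ha -hb; lia.
Qed.

Lemma l1_one (x y : 'I_m -> nat) : l1 y x = 1%N -> (\sum_e y e = (\sum_e x e).+1)%N ->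
  exists b, forall e, (y e = x e + (e == b))%N.
Proof.
move=> hl hs; have [h1 h2] := l1_split x y.
have hP : (\sum_e (y e - x e) = 1)%N by lia.
have hQ : (\sum_e (x e - y e) == 0)%N by apply/eqP; lia.
have [b hb] := sum1_nat hP.
exists b => e; rewrite -hb.
move: hQ; rewrite sum_nat_eq0 => /forallP /(_ e) /= /eqP; lia.
Qed.

Lemma sum_rel (P : pred 'I_m) (v w : 'I_m -> nat) a b :
  (forall e, w e + (e == a) = v e + (e == b))%N ->
  (\sum_(e | P e) w e + P a = \sum_(e | P e) v e + P b)%N.
Proof.
move=> hr.
have hs : forall c, (\sum_(e | P e) (e == c) = P c)%N.
  move=> c; case hc: (P c).
  - rewrite (bigD1 c) //= eqxx big1 // => e /andP [_ /negbTE ->] //.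
  - rewrite big1 // => e he; case: eqP => // ec; by rewrite -ec he in hc.
rewrite -{1}(hs a) -{1}(hs b) -!big_split /=; exact: eq_bigr.
Qed.

Lemma sum_relU (U : {set 'I_m}) (v w : 'I_m -> nat) a b :
  (forall e, w e + (e == a) = v e + (e == b))%N ->
  (\sum_(e in U) w e + (a \in U) = \sum_(e in U) v e + (b \in U))%N.
Proof. exact: (sum_rel (fun e => e \in U)). Qed.

Lemma sum_relT (v w : 'I_m -> nat) a b :
  (forall e, w e + (e == a) = v e + (e == b))%N ->
  (\sum_e w e = \sum_e v e)%N.
Proof. move=> h; have := sum_rel xpredT h => /=; lia. Qed.

Definition exv (v : 'I_m -> nat) (a b : 'I_m) : 'I_m -> nat :=
  fun e => (v e + (e == b) - (e == a))%N.

Lemma exvE v a b : a != b -> (1 <= v a)%N ->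
  forall e, (exv v a b e + (e == a) = v e + (e == b))%N.
Proof.
move=> nab hv e; rewrite /exv; case: (eqVneq e a) => [->|nea].
- rewrite (negbTE nab) /=; lia.
- rewrite /=; lia.
Qed.

Lemma arith1 (S Y Z W F : nat) (ba bc bh : bool) :
  (Y + bc = S + bh -> Z + ba = Y + bh -> W + ba = S + bh -> S <= F -> Y <= F -> Z <= F -> W <= F)%N.
Proof. case: ba; case: bc; case: bh => /=; lia. Qed.

Lemma arith2 (S Y Z W F : nat) (ba bh : bool) :
  (Y = S + bh -> Z + ba = Y + bh -> W + ba = S + bh -> S <= F -> Y <= F -> Z <= F -> W <= F)%N.
Proof. case: ba; case: bh => /=; lia. Qed.

Lemma feas1 (fk : {set 'I_m} -> nat) dk (P y z : 'I_m -> nat) a c h :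
  c != h -> a != h -> a != c -> (1 <= P c)%N -> (1 <= y a)%N ->
  (forall e, y e + (e == c) = P e + (e == h))%N ->
  (forall e, z e + (e == a) = y e + (e == h))%N ->
  inB fk dk P -> inB fk dk y -> inB fk dk z -> inB fk dk (exv P a h).
Proof.
move=> nch nah nac hPc hya ry rz [P1 P2] [y1 y2] [z1 z2].
have hPa : (1 <= P a)%N by move: (ry a); rewrite (negbTE nac) (negbTE nah) /=; lia.
have rw := exvE nah hPa.
split.
- move=> U; have r1 := sum_relU U ry; have r2 := sum_relU U rz;
  have r3 := sum_relU U rw; have q1 := P1 U; have q2 := y1 U; have q3 := z1 U.
  exact: (arith1 r1 r2 r3 q1 q2 q3).
- by rewrite (sum_relT rw).
Qed.

Lemma feas2 (fk : {set 'I_m} -> nat) dk (P y z : 'I_m -> nat) a h :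
  a != h -> (1 <= y a)%N ->
  (forall e, y e = P e + (e == h))%N ->
  (forall e, z e + (e == a) = y e + (e == h))%N ->
  inB fk dk P -> inB fk dk.+1 y -> inB fk dk.+1 z -> inB fk dk (exv P a h).
Proof.
move=> nah hya ry rz [P1 P2] [y1 y2] [z1 z2].
have hPa : (1 <= P a)%N by move: (ry a); rewrite (negbTE nah) /=; lia.
have rw := exvE nah hPa.
have ry' : forall e, (y e + (e == h) = P e + (e == h) + (e == h))%N by move=> e; rewrite ry.
split.
- move=> U; have r2 := sum_relU U rz;
  have r3 := sum_relU U rw; have q1 := P1 U; have q2 := y1 U; have q3 := z1 U.
  have r1 : (\sum_(e in U) y e = \sum_(e in U) P e + (h \in U))%N.
    have -> : (\sum_(e in U) y e = \sum_(e in U) (P e + (e == h)))%N by apply: eq_bigr => e _; rewrite ry.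
    rewrite big_split /=; congr (_ + _)%N.
    case hU: (h \in U).
    - rewrite (bigD1 h) //= eqxx big1 // => e /andP [_ /negbTE ->] //.
    - rewrite big1 // => e he; case: eqP => // eh; by rewrite -eh he in hU.
  exact: (arith2 r1 r2 r3 q1 q2 q3).
- by rewrite (sum_relT rw).
Qed.
End Vec.


Section Game.
Variables (R : realType) (n m : nat).
Variable f : 'I_n -> {set 'I_m} -> nat.
Variable d : 'I_n -> nat.
Variable C : 'I_n -> 'I_m -> nat -> nat -> R.
Hypothesis Creg : forall i e, regular (C i e).
Local Open Scope ring_scope.

Definition oth (x : profile n m) (j : 'I_n) (e : 'I_m) : nat := (\sum_(i < n | i != j) x i e)%N.
Definition ld (x : profile n m) (e : 'I_m) : nat := (\sum_(i < n) x i e)%N.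

Lemma ld_oth x j e : ld x e = (x j e + oth x j e)%N.
Proof. by rewrite /ld (bigD1 j). Qed.

Lemma upd_same (T : Type) (x : 'I_n -> T) j z : upd x j z j = z.
Proof. by rewrite /upd eqxx. Qed.
Lemma upd_other (T : Type) (x : 'I_n -> T) j z k : k != j -> upd x j z k = x k.
Proof. by rewrite /upd => /negbTE ->. Qed.
Lemma upd_upd (T : Type) (x : 'I_n -> T) j y z : upd (upd x j y) j z = upd x j z.
Proof. apply: functional_extensionality => k; rewrite /upd; by case: (k == j). Qed.

Lemma oth_upd x j z e : oth (upd x j z) j e = oth x j e.
Proof. apply: eq_bigr => i hi; by rewrite upd_other. Qed.

Lemma pcostE x j : pcost C x j = \sum_e C j e (x j e) (oth x j e).
Proof. by []. Qed.

Lemma pcost_upd x j z : pcost C (upd x j z) j = \sum_e C j e (z e) (oth x j e).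
Proof. rewrite pcostE; apply: eq_bigr => e _; by rewrite upd_same oth_upd. Qed.

Lemma pcost_ex x j z a b : a != b -> (1 <= x j a)%N ->
  (forall e, (z e + (e == a) = x j e + (e == b))%N) ->
  pcost C (upd x j z) j = pcost C x j + marg (C j b) (x j b).+1 (oth x j b)
                           - marg (C j a) (x j a) (oth x j a).
Proof.
move=> nab ha hz.
have zb : z b = (x j b).+1 by move: (hz b); rewrite eqxx eq_sym (negbTE nab) /=; lia.
have za : z a = (x j a).-1 by move: (hz a); rewrite eqxx (negbTE nab) /=; lia.
have zo : forall e, e != b -> e != a -> z e = x j e.
  move=> e heb hea; move: (hz e); rewrite (negbTE heb) (negbTE hea) /=; lia.
have nba : b != a by rewrite eq_sym.
rewrite pcost_upd pcostE (bigD1 b) //= (bigD1 a) //=.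
rewrite [in RHS](bigD1 b) //= [in RHS](bigD1 a) //=.
rewrite zb za.
have -> : \sum_(i | (i != b) && (i != a)) C j i (z i) (oth x j i)
        = \sum_(i | (i != b) && (i != a)) C j i (x j i) (oth x j i).
  apply: eq_bigr => e /andP [h1 h2]; by rewrite zo.
rewrite /marg /=. lra.
Qed.

Lemma noimp_ex x j dj z a b : a != b -> (1 <= x j a)%N ->
  (forall e, (z e + (e == a) = x j e + (e == b))%N) -> inB (f j) dj z ->
  (forall z, inB (f j) dj z -> pcost C x j <= pcost C (upd x j z) j) ->
  marg (C j a) (x j a) (oth x j a) <= marg (C j b) (x j b).+1 (oth x j b).
Proof. move=> nab ha hz hB hopt; have := hopt z hB; rewrite (pcost_ex nab ha hz); lra. Qed.

Lemma imp_ex x j z a b : a != b -> (1 <= x j a)%N ->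
  (forall e, (z e + (e == a) = x j e + (e == b))%N) ->
  pcost C (upd x j z) j < pcost C x j ->
  marg (C j b) (x j b).+1 (oth x j b) < marg (C j a) (x j a) (oth x j a).
Proof. move=> nab ha hz; rewrite (pcost_ex nab ha hz); lra. Qed.

Lemma nci_opt x j dj : ~ can_improve f C x j dj ->
  forall z, inB (f j) dj z -> pcost C x j <= pcost C (upd x j z) j.
Proof. move=> h z hz; rewrite leNgt; apply/negP => hlt; apply: h; by exists z. Qed.

Definition CS (L : 'I_m -> nat) k (v : 'I_m -> nat) (dk : nat) : Prop :=
  forall a b z, a != b -> (1 <= v a)%N -> (forall e, (z e + (e == a) = v e + (e == b))%N) ->
    inB (f k) dk z ->
    marg (C k a) (v a) (L a - v a) <= marg (C k b) (v b).+1 (L b - v b).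

Definition INV (L : 'I_m -> nat) (h : 'I_m) (p : 'I_n) (s : state n m) : Prop :=
  [/\ forall e, ld s.2 e = (L e + (e == h))%N,
      forall z, inB (f p) (s.1 p) z -> pcost C s.2 p <= pcost C (upd s.2 p z) p,
      forall k, k != p -> CS L k (s.2 k) (s.1 k),
      forall a z, a != h -> (1 <= s.2 p a)%N ->
        (forall e, (z e + (e == a) = s.2 p e + (e == h))%N) -> inB (f p) (s.1 p) z ->
        marg (C p a) (s.2 p a) (L a - s.2 p a) <= marg (C p h) (s.2 p h) (L h + 1 - s.2 p h)
    & (1 <= s.2 p h)%N].

Lemma holder_CS L h p s : INV L h p s -> CS L p (s.2 p) (s.1 p).
Proof.
case: s => db x /= [hl hb hc hd he] a c z nac ha hz hzB.
have := noimp_ex nac ha hz hzB hb.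
have oe : forall e, oth x p e = (L e + (e == h) - x p e)%N.
  by move=> e; rewrite -hl (ld_oth x p e); lia.
rewrite !oe => H.
case: (eqVneq c h) => [ech|nch].
- subst c.
  apply: (le_trans (hd a z nac ha hz hzB)).
  have := marg_G (Creg p h) (L h + 1) he.
  by have -> : (L h + 1 - (x p h).+1 = L h - x p h)%N by lia.
- have e1 : (L c + (c == h) - x p c = L c - x p c)%N by rewrite (negbTE nch) addn0.
  rewrite e1 in H. apply: le_trans H. apply: marg_mono_t => //. lia.
Qed.

Definition dl := (\max_(i < n) d i)%N.
Definition Gc (L : 'I_m -> nat) k e u : R := marg (C k e) u (L e + 1 - u)%N.
Definition rk L k (v : R) : nat := #|[set q : 'I_m * 'I_dl | Gc L k q.1 (q.2).+1 < v]|.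
Definition phiv L k (v : 'I_m -> nat) : nat := (\sum_e \sum_(u < v e) rk L k (Gc L k e u.+1))%N.
Definition Psi L (x : profile n m) : nat := (\sum_k phiv L k (x k))%N.

Lemma rk_lt L k v1 v2 (e : 'I_m) u : (u < dl)%N -> Gc L k e u.+1 = v1 -> v1 < v2 ->
  (rk L k v1 < rk L k v2)%N.
Proof.
move=> hu hv h12; apply: proper_card; apply/properP; split.
- apply/subsetP => q; rewrite !inE => hq; exact: lt_trans hq h12.
- exists (e, Ordinal hu); rewrite inE /= hv //.
  by rewrite ltxx.
Qed.

Lemma rk_le L k v : (rk L k v <= m * dl)%N.
Proof. by rewrite /rk (leq_trans (max_card _)) // card_prod !card_ord. Qed.

Lemma le_sum_one (F : 'I_m -> nat) b : (F b <= \sum_e F e)%N.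
Proof. by rewrite (bigD1 b) //= leq_addr. Qed.

Lemma phiv_move L k (x y : 'I_m -> nat) h b : h != b ->
  (forall e, y e + (e == h) = x e + (e == b))%N ->
  (phiv L k y + rk L k (Gc L k h (x h)) = phiv L k x + rk L k (Gc L k b (x b).+1))%N.
Proof.
move=> nhb hr.
have yh : x h = (y h).+1 by move: (hr h); rewrite eqxx (negbTE nhb) /=; lia.
have yb : y b = (x b).+1 by move: (hr b); rewrite eqxx eq_sym (negbTE nhb) /=; lia.
have yo : forall e, e != h -> e != b -> y e = x e.
  move=> e h1 h2; move: (hr e); rewrite (negbTE h1) (negbTE h2) /=; lia.
have nbh : b != h by rewrite eq_sym.
rewrite /phiv (bigD1 h) //= (bigD1 b) //= [in RHS](bigD1 h) //= [in RHS](bigD1 b) //=.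
have -> : (\sum_(i | (i != h) && (i != b)) \sum_(u < y i) rk L k (Gc L k i u.+1)
        = \sum_(i | (i != h) && (i != b)) \sum_(u < x i) rk L k (Gc L k i u.+1))%N.
  by apply: eq_bigr => e /andP [h1 h2]; rewrite yo.
rewrite yh yb !big_ord_recr /=.
set A := (\sum_(i < y h) _)%N. set B := (\sum_(i < x b) _)%N.
set S := (\sum_(i | _) _)%N.
lia.
Qed.

Lemma arith3 (a r b s S : nat) : (a + r = b + s -> a + S + r = b + S + s)%N.
Proof. lia. Qed.

Lemma Psi_move L (x : profile n m) j y h b : h != b ->
  (forall e, y e + (e == h) = x j e + (e == b))%N ->
  (Psi L (upd x j y) + rk L j (Gc L j h (x j h)) = Psi L x + rk L j (Gc L j b (x j b).+1))%N.
Proof.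
move=> nhb hr; rewrite /Psi (bigD1 j) //= [in RHS](bigD1 j) //= upd_same.
have -> : (\sum_(i | i != j) phiv L i (upd x j y i) = \sum_(i | i != j) phiv L i (x i))%N.
  by apply: eq_bigr => i hi; rewrite upd_other.
exact: (arith3 _ (phiv_move L j nhb hr)).
Qed.

Lemma Psi_bound L (db : 'I_n -> nat) (x : profile n m) :
  (forall k, inB (f k) (db k) (x k)) -> (forall k, db k <= d k)%N ->
  (Psi L x <= n * m * dl ^ 2)%N.
Proof.
move=> hB hd.
have h1 : forall k, (phiv L k (x k) <= db k * (m * dl))%N.
  move=> k; rewrite -(hB k).2 big_distrl /=; apply: leq_sum => e _.
  apply: (@leq_trans (\sum_(u < x k e) (m * dl))%N).
    by apply: leq_sum => u _; exact: rk_le.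
  by rewrite sum_nat_const card_ord.
apply: (@leq_trans (\sum_(k < n) dl * (m * dl))%N).
  apply: leq_sum => k _; apply: (leq_trans (h1 k)); rewrite leq_mul2r; apply/orP; right.
  exact: (leq_trans (hd k) (leq_bigmax k)).
rewrite sum_nat_const card_ord.
have -> : (dl ^ 2 = dl * dl)%N by rewrite expnS expn1.
lia.
Qed.

Lemma imp_inv L h p (s s' : state n m) :
  INV L h p s -> (forall k, inB (f k) (s.1 k) (s.2 k)) -> (forall k, (s.1 k <= d k)%N) ->
  imp_step f C s s' ->
  exists h' p', INV L h' p' s' /\ (Psi L s'.2 < Psi L s.2)%N.
Proof.
case: s => db x; case: s' => db' x' Hinv HB Hd [j [y [hci /= e1 hbr hl2 e2]]].
subst db' x'.
have Hinv' := Hinv; case: Hinv => /= hl hb hc hd he.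
have njp : j != p.
  apply/eqP => ejp; subst j; case: hci => z [hz hlt]; have := hb z hz; lra.
have [hyB hyopt] := hbr.
have hsum : (\sum_e y e = \sum_e x j e)%N by rewrite hyB.2 (HB j).2.
have [a [b [nab ha hrel]]] := l1_two hl2 hsum.
have hlt : pcost C (upd x j y) j < pcost C x j.
  case: hci => z [hz hzlt]; exact: (le_lt_trans (hyopt z hz) hzlt).
have hstr := imp_ex nab ha hrel hlt.
have oe : forall e, oth x j e = (L e + (e == h) - x j e)%N.
  by move=> e; rewrite -hl (ld_oth x j e); lia.
have CSj := hc j njp.
have eah : a = h.
  apply/eqP; apply/negPn/negP => nah.
  have h1 := CSj a b y nab ha hrel hyB.
  rewrite !oe (negbTE nah) addn0 in hstr.
  have h2 : marg (C j b) (x j b).+1 (L b - x j b)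
            <= marg (C j b) (x j b).+1 (L b + (b == h) - x j b).
    by apply: marg_mono_t => //; lia.
  by have := le_lt_trans (le_trans h1 h2) hstr; rewrite ltxx.
subst a.
have nbh : b != h by rewrite eq_sym.
have yb : y b = (x j b).+1 by move: (hrel b); rewrite eqxx (negbTE nbh) /=; lia.
exists b, j; split.
- split => /=.
  + move=> e; rewrite (ld_oth _ j) upd_same oth_upd.
    have := hl e; rewrite (ld_oth x j e); have := hrel e; lia.
  + by move=> z hz; rewrite upd_upd; exact: hyopt.
  + move=> k nkj; rewrite upd_other //.
    case: (eqVneq k p) => [->|nkp]; [exact: (holder_CS Hinv') | exact: hc].
  + move=> a' z na'b; rewrite upd_same => ha' hz hzB.
    case: (eqVneq a' h) => [ea'|na'h].
    * subst a'.
      have yh : x j h = (y h).+1 by move: (hrel h); rewrite eqxx (negbTE nab) /=; lia.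
      have k1 := CSj h b y nab ha hrel hyB.
      have k2 := marg_G (Creg j h) (L h) ha'.
      rewrite yb; have -> : (L b + 1 - (x j b).+1 = L b - x j b)%N by lia.
      rewrite yh in k1; exact: le_trans k2 k1.
    * have ya : y a' = x j a' by move: (hrel a'); rewrite (negbTE na'h) (negbTE na'b) /=; lia.
      have feas := feas1 nab na'b na'h ha ha' hrel hz (HB j) hyB hzB.
      have hxa : (1 <= x j a')%N by rewrite -ya.
      have k := CSj a' b (exv (x j) a' b) na'b hxa (exvE na'b hxa) feas.
      rewrite ya yb; have -> : (L b + 1 - (x j b).+1 = L b - x j b)%N by lia.
      exact: k.
  + by rewrite upd_same yb.
- have hm := Psi_move L nab hrel.
  have hxb : (x j b < dl)%N.
    have : (y b <= db j)%N by rewrite -hyB.2; exact: le_sum_one.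
    move=> hyd; rewrite -ltnS -yb; apply: leq_trans (leq_trans hyd (Hd j)) _.
    exact: leq_bigmax.
  have hv : Gc L j b (x j b).+1 < Gc L j h (x j h).
    rewrite /Gc; have -> : (L b + 1 - (x j b).+1 = L b - x j b)%N by lia.
    move: hstr; rewrite !oe eqxx (negbTE nbh) addn0 /=. by rewrite addn1.
  have := rk_lt hxb erefl hv.
  rewrite /=; lia.
Qed.

Lemma inc_inv (s s' : state n m) : (forall k, inB (f k) (s.1 k) (s.2 k)) ->
  inc_step f C d s s' -> exists h p, INV (ld s.2) h p s'.
Proof.
case: s => db x; case: s' => db' x' HB [i [y [hst [hlt e1] hbr hl1 e2]]] /=.
move: e1 e2 hst hbr hl1 => /= e1 e2 hst hbr hl1; subst db' x'.
have [hyB hyopt] := hbr.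
have hsum : (\sum_e y e = (\sum_e x i e).+1)%N by rewrite hyB.2 (HB i).2.
have [e0 he0] := l1_one hl1 hsum.
have oe : forall k e, oth x k e = (ld x e - x k e)%N.
  by move=> k e; rewrite (ld_oth x k e); lia.
exists e0, i; split => /=.
- move=> e; rewrite (ld_oth _ i) upd_same oth_upd he0 (ld_oth x i e); lia.
- move=> z hz; rewrite upd_upd; apply: hyopt; move: hz; by rewrite upd_same.
- move=> k nki; rewrite !upd_other //.
  move=> a b z nab ha hz hzB.
  have := noimp_ex nab ha hz hzB (nci_opt (hst k)).
  by rewrite !oe.
- move=> a z nae; rewrite !upd_same => ha hz hzB.
  have ya : y a = x i a by rewrite he0 (negbTE nae) addn0.
  have ye : y e0 = (x i e0).+1 by rewrite he0 eqxx addn1.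
  have feas := feas2 nae ha he0 hz (HB i) hyB hzB.
  have hxa : (1 <= x i a)%N by rewrite -ya.
  have := noimp_ex nae hxa (exvE nae hxa) feas (nci_opt (hst i)).
  rewrite !oe ya ye.
  by have -> : (ld x e0 + 1 - (x i e0).+1 = ld x e0 - x i e0)%N by lia.
- by rewrite upd_same he0 eqxx addn1.
Qed.

End Game.


Theorem corollary5p2 (R : realType) (n m : nat)
    (f : 'I_n -> {set 'I_m} -> nat) (d : 'I_n -> nat)
    (C : 'I_n -> 'I_m -> nat -> nat -> R) :
  (forall i, polymatroid (f i)) ->
  (forall i, (d i <= f i [set: 'I_m])%N) ->
  (forall i e, regular (C i e)) ->
  forall (N : nat) (s : nat -> state n m) (kind : nat -> bool),
    valid_run f C d N s kind ->
    (\sum_(k < N) kind k <= n ^ 2 * m * (\max_(i < n) d i) ^ 3)%N.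
Proof.
move=> _ _ Hreg N s kind [Hs0 Hstep].
have -> : (\max_(i < n) d i)%N = dl d by [].
set K := (n * m * dl d ^ 2)%N.
pose cnt k := (\sum_(i < k) kind i)%N.
pose sd k := (\sum_i (s k).1 i)%N.
have key : forall k, (k <= N)%N ->
  [/\ forall i, ((s k).1 i <= d i)%N,
      forall j, inB (f j) ((s k).1 j) ((s k).2 j) &
      ((forall j, ~ can_improve f C (s k).2 j ((s k).1 j)) /\ (cnt k <= K * sd k)%N) \/
      (exists L h p, INV f C L h p (s k) /\ (cnt k + Psi d C L (s k).2 <= K * sd k)%N)].
  elim => [_|k IH hk].
  - rewrite Hs0 /=; split.
    + by [].
    + by move=> j; split => [U|]; rewrite big1.
    + left; split; last by rewrite /cnt big_ord0.
      move=> j [z [[_ hz] hlt]].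
      have z0 : z = fun _ => 0%N.
        apply: functional_extensionality => e.
        have : (\sum_e z e == 0)%N by rewrite hz.
        by rewrite sum_nat_eq0 => /forallP /(_ e) /eqP.
      subst z.
      have hu : upd (fun _ _ => 0%N) j (fun _ => 0%N) = (fun (_ : 'I_n) (_ : 'I_m) => 0%N).
        by apply: functional_extensionality => i; rewrite /upd; case: (i == j).
      by move: hlt; rewrite hu ltxx.
  - have [hd hB hor] := IH (ltnW hk).
    have := Hstep k hk.
    have ecnt : cnt k.+1 = (cnt k + kind k)%N by rewrite /cnt big_ord_recr.
    case hkk: (kind k) => Hs.
    + case: hor => [[hst _]|[L [h [p [hinv hc]]]]].
      * by exfalso; case: Hs => j [y [hci _ _ _ _]]; exact: hst j hci.
      * have [h' [p' [hinv' hlt]]] := imp_inv Hreg hinv hB hd Hs.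
        have e1 : (s k.+1).1 = (s k).1 by case: Hs => j [y [_ e _ _ _]].
        split.
        -- by move=> i; rewrite e1; exact: hd.
        -- move=> j; case: Hs => j' [y [_ e hbr _ e']]; rewrite e e'.
           case: (eqVneq j j') => [->|njj]; first by rewrite upd_same; exact: hbr.1.
           by rewrite upd_other //; exact: hB.
        -- right; exists L, h', p'; split => //.
           have : sd k.+1 = sd k by rewrite /sd e1.
           move: hc; rewrite ecnt hkk /=; lia.
    + have [h [p hinv]] := inc_inv hB Hs.
      case: Hs => i [y [hst [hlt e1] hbr hl1 e2]].
      have hd' : forall i', ((s k.+1).1 i' <= d i')%N.
        move=> i'; rewrite e1; case: (eqVneq i' i) => [->|nii]; first by rewrite upd_same.
        by rewrite upd_other.
      have hB' : forall j, inB (f j) ((s k.+1).1 j) ((s k.+1).2 j).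
        move=> j; rewrite e1 e2; case: (eqVneq j i) => [->|nji]; first by rewrite !upd_same; exact: hbr.1.
        by rewrite !upd_other //; exact: hB.
      have hsd : sd k.+1 = (sd k).+1.
        rewrite /sd e1 (bigD1 i) //= [in RHS](bigD1 i) //= upd_same.
        have -> : (\sum_(j | j != i) upd (s k).1 i ((s k).1 i).+1 j = \sum_(j | j != i) (s k).1 j)%N.
          by apply: eq_bigr => j hj; rewrite upd_other.
        by rewrite addSn.
      have hck : (cnt k <= K * sd k)%N.
        by case: hor => [[_ //]|[L [h0 [p0 [_ hc]]]]]; lia.
      have hPsi := Psi_bound C (ld (s k).2) hB' hd'.
      split => //; right; exists (ld (s k).2), h, p; split => //.
      rewrite ecnt hkk hsd mulnS /=; move: hPsi; rewrite -/K; lia.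
have [_ _ hor] := key N (leqnn N).
have hcN : (cnt N <= K * sd N)%N.
  by case: hor => [[_ //]|[L [h0 [p0 [_ hc]]]]]; lia.
have hsdN : (sd N <= n * dl d)%N.
  have [hd _ _] := key N (leqnn N).
  apply: (@leq_trans (\sum_(i < n) dl d)%N); last by rewrite sum_nat_const card_ord.
  apply: leq_sum => i _; exact: (leq_trans (hd i) (leq_bigmax i)).
apply: (leq_trans hcN); apply: (leq_trans (leq_mul (leqnn K) hsdN)).
rewrite /K !expnS !expn0 !muln1; apply: eq_leq; ring.
Qed.
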